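(* Let $\varsigma,\lambda:[0,1]\to\mathbb{R}_{>0}$ be deterministic Hölder-continuous functions and $f>0$. For integrable $\phi:[0,1]\to\mathbb{R}_{>0}$ with $\int_0^1\phi(s)ds=1$ and integrable $\mu:[0,1]\to[0,\infty)$, consider the asymptotic variance $$V(\phi,\mu):=\frac{2}{f}\int_0^1\frac{\varsigma^4(r)\lambda^2(r)}{\phi(r)}dr+2\int_0^1\varsigma^4(r)\mu(r)dr+\int_0^1\varsigma^4(r)\lambda(r)dr.$$ Then $V(\phi,\mu)$ is minimized by the choice $$\phi(t)=\frac{\varsigma^2(t)\lambda(t)}{\int_0^1\varsigma^2(r)\lambda(r)dr},\qquad\mu(t)=0,$$ and the minimal value equals $\frac{2}{f}\mathrm{IV}^2+\mathrm{IQ}$, where $\mathrm{IV}=\int_0^1\varsigma^2(r)\lambda(r)dr$ and $\mathrm{IQ}=\int_0^1\varsigma^4(r)\lambda(r)dr$.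
   Context: $V(\phi,\mu)$ is the asymptotic variance of $\sqrt{T}(\mathrm{RV}(\boldsymbol{\tau}^T)-\mathrm{IV})$ for a realized variance estimator under a sampling scheme with sampling frequency $f$, sampling intensity function $\phi$ (the limiting normalized inverse of expected waiting times between sampling points) and $\mu$ (the limiting conditional variance rate of the number of ticks between adjacent sampling points), in a tick-time stochastic volatility model with rescaled tick volatility $\varsigma$ and trading intensity $\lambda$. *)

(* Defs.v *)
From HB Require Import structures.
From mathcomp Require Import all_boot all_order all_algebra.
From mathcomp Require Import all_classical all_reals all_analysis.
Set Implicit Arguments. Unset Strict Implicit. Unset Printing Implicit Defensive.
Import Order.TTheory GRing.Theory Num.Theory numFieldNormedType.Exports.
Local Open Scope classical_set_scope.
Local Open Scope ring_scope.

Definition holder01 {R : realType} (g : R -> R) : Prop :=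
  exists (C alpha : R), 0 <= C /\ 0 < alpha /\ alpha <= 1 /\
    forall s t, s \in `[0%R, 1%R] -> t \in `[0%R, 1%R] ->
      `|g s - g t| <= C * (`|s - t| `^ alpha).

Definition admissible_phi {R : realType} (phi : R -> R) : Prop :=
  (@lebesgue_measure R).-integrable `[0%R, 1%R] (EFin \o phi) /\
  (forall t, t \in `[0%R, 1%R] -> 0 < phi t) /\
  (\int[@lebesgue_measure R]_(x in `[0%R, 1%R]) (phi x)%:E = 1%:E)%E.

Definition admissible_mu {R : realType} (mu : R -> R) : Prop :=
  (@lebesgue_measure R).-integrable `[0%R, 1%R] (EFin \o mu) /\
  (forall t, t \in `[0%R, 1%R] -> 0 <= mu t).

(* Asymptotic variance V(phi, mu), as an extended real (the first integral
   may be +oo when 1/phi is not integrable). *)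
Definition asymp_var {R : realType} (f : R) (vs lam phi mu : R -> R) : \bar R :=
  ((2 / f)%:E *
     \int[@lebesgue_measure R]_(r in `[0%R, 1%R]) (vs r ^+ 4 * lam r ^+ 2 / phi r)%:E
   + 2%:E * \int[@lebesgue_measure R]_(r in `[0%R, 1%R]) (vs r ^+ 4 * mu r)%:E
   + \int[@lebesgue_measure R]_(r in `[0%R, 1%R]) (vs r ^+ 4 * lam r)%:E)%E.

Definition IV {R : realType} (vs lam : R -> R) : R :=
  Rintegral (@lebesgue_measure R) `[0%R, 1%R] (fun r => vs r ^+ 2 * lam r).
Definition IQ {R : realType} (vs lam : R -> R) : R :=
  Rintegral (@lebesgue_measure R) `[0%R, 1%R] (fun r => vs r ^+ 4 * lam r).

(* Main.v *)
Require Import Defs.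
From HB Require Import structures.
From mathcomp Require Import all_boot all_order all_algebra.
From mathcomp Require Import all_classical all_reals all_analysis.
From mathcomp Require Import measurable_realfun ring lra.
Import Order.TTheory GRing.Theory Num.Theory numFieldNormedType.Exports.
Local Open Scope classical_set_scope.
Local Open Scope ring_scope.

Section H.
Variable R : realType.
Notation A := ([set` `[0%R, 1%R]] : set R).
Notation leb := (@lebesgue_measure R).

Lemma holder_cont (g : R -> R) :
  holder01 g -> {within `[0%R, 1%R], continuous g}.
Proof.
move=> [C [al [C0 [al0 [al1 H]]]]].
apply/subspace_continuousP => x Ax.
apply/cvgrPdist_lt => e e0.
have C1 : 0 < C + 1 by rewrite ltr_wpDl.
pose e' := e / (C + 1).
have e'0 : 0 < e' by rewrite divr_gt0.
pose d := e' `^ al^-1.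
have d0 : 0 < d by rewrite powR_gt0.
rewrite /within /=.
exists d => //= t /= xt At.
have Ax' : x \in `[0%R, 1%R] by exact: Ax.
apply: (le_lt_trans (H x t Ax' At)).
have h1 : `|x - t| `^ al < e'.
  have -> : e' = d `^ al.
    by rewrite /d -powRrM mulVf ?gt_eqF // powRr1 // ltW.
  by apply: gt0_ltr_powR => //; rewrite nnegrE ?ltW.
apply: (le_lt_trans (y := C * e')).
  by apply: ler_wpM2l => //; apply: ltW.
rewrite /e' mulrA ltr_pdivrMr // mulrDr mulr1 mulrC ltrDl //.
Qed.



Lemma wcM (f g : R -> R) : {within A, continuous f} -> {within A, continuous g} ->
  {within A, continuous (fun x => f x * g x)}.
Proof. by move=> cf cg x; exact: (continuousM (cf x) (cg x)). Qed.

Lemma wcC (k : R) : {within A, continuous (fun _ : R => k)}.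
Proof. exact: cst_continuous. Qed.

Lemma wcX (f : R -> R) n : {within A, continuous f} ->
  {within A, continuous (fun x => f x ^+ n)}.
Proof.
move=> cf; elim: n => [|n IH].
  by rewrite (_ : (fun x => f x ^+ 0) = fun _ => 1); [exact: wcC|apply/funext=> x; rewrite expr0].
rewrite (_ : (fun x => f x ^+ n.+1) = fun x => f x * f x ^+ n).
  exact: wcM.
by apply/funext => x; rewrite exprS.
Qed.

Lemma mA : measurable (A : set (measurableTypeR R)).
Proof. exact: measurable_itv. Qed.

Lemma intc (f : R -> R) : {within A, continuous f} -> leb.-integrable A (EFin \o f).
Proof. by move=> cf; apply: continuous_compact_integrable => //; exact: segment_compact. Qed.

Lemma intE (f : R -> R) : leb.-integrable A (EFin \o f) ->
  (\int[leb]_(x in A) (f x)%:E = (Rintegral leb A f)%:E)%E.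
Proof. by move=> fi; rewrite /Rintegral fineK //; exact: (@integrable_fin_num _ _ _ leb A mA _ fi). Qed.

Lemma mesV (p : R -> R) : measurable_fun A p -> (forall t, A t -> 0 < p t) ->
  measurable_fun A (fun t => (p t)^-1).
Proof.
move=> mp pp.
change (measurable_fun A (@GRing.inv R \o p)).
apply: (measurable_comp _ _ _ mp); first exact: (measurable_itv `]0%R, +oo[).
- by move=> _ [t At <-]; rewrite /= in_itv /= andbT; exact: pp.
- apply: open_continuous_measurable_fun; first exact: interval_open.
  move=> x; rewrite inE /= in_itv /= andbT => x0; apply: inv_continuous.
  by rewrite gt_eqF.
Qed.

Lemma lower (a p : R -> R) (I : R) :
  leb.-integrable A (EFin \o a) -> admissible_phi p ->
  (\int[leb]_(x in A) (a x)%:E = I%:E)%E ->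
  ((I ^+ 2)%:E <= \int[leb]_(x in A) (a x ^+ 2 / p x)%:E)%E.
Proof.
move=> ia [ip [pp p1]] Ia.
have pp' : forall t, A t -> 0 < p t by move=> t At; exact: pp.
have ma : measurable_fun A a by apply/measurable_EFinP; exact: measurable_int ia.
have mp : measurable_fun A p by apply/measurable_EFinP; exact: measurable_int ip.
have mg : measurable_fun A (fun x => a x ^+ 2 / p x).
  by apply: measurable_funM; [exact: measurable_funX|exact: mesV].
pose h x := 2 * I * a x - I ^+ 2 * p x.
have i1 : leb.-integrable A (EFin \o (fun x => 2 * I * a x)).
  apply: (eq_integrable mA _ _ _ (integrableZl mA (2 * I) ia)).
  by move=> x _; rewrite /= EFinM.
have i2 : leb.-integrable A (EFin \o (fun x => I ^+ 2 * p x)).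
  apply: (eq_integrable mA _ _ _ (integrableZl mA (I ^+ 2) ip)).
  by move=> x _; rewrite /= EFinM.
have ih : leb.-integrable A (EFin \o h).
  apply: (eq_integrable mA _ _ _ (integrableB mA i1 i2)).
  by move=> x _; rewrite /= /h EFinB.
have Ih : (\int[leb]_(x in A) (h x)%:E = (I ^+ 2)%:E)%E.
  rewrite /h.
  under eq_integral do rewrite EFinB.
  rewrite (@integralB_EFin _ _ _ leb A _ _ mA i1 i2).
  under eq_integral do rewrite EFinM.
  rewrite (integralZl mA ia).
  under [X in (_ - X)%E]eq_integral do rewrite EFinM.
  rewrite (integralZl mA ip).
  by rewrite Ia p1 -!EFinM -EFinB mulr1 expr2; congr (_%:E); ring.
have hg : forall x, A x -> h x <= a x ^+ 2 / p x.
  move=> x Ax; have px := pp' x Ax.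
  rewrite ler_pdivlMr // /h.
  have := sqr_ge0 (a x - I * p x); nra.
rewrite -Ih.
have [ig|nig] := pselect (leb.-integrable A (EFin \o (fun x => a x ^+ 2 / p x))).
  apply: (le_integral mA ih ig).
  by move=> x /set_mem Ax; rewrite lee_fin; exact: hg.
have g0 : forall x, A x -> 0 <= a x ^+ 2 / p x.
  by move=> x Ax; rewrite divr_ge0 // ?sqr_ge0 // ltW // pp'.
suff -> : (\int[leb]_(x in A) (a x ^+ 2 / p x)%:E = +oo)%E by exact: leey.
apply/eqP; rewrite eq_le leey /= leNgt; apply/negP => lt.
apply: nig; apply/integrableP; split; first exact/measurable_EFinP.
apply: (le_lt_trans _ lt); apply: (ge0_le_integral _ mA).
- by move=> x _; exact: abse_ge0.
- by apply/measurableT_comp => //; exact/measurable_EFinP.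
- exact/measurable_EFinP.
- by move=> x Ax /=; rewrite lee_fin ger0_norm //; exact: g0.
Qed.


Lemma main_aux (vs lam : R -> R) (f : R) :
  holder01 vs -> holder01 lam ->
  (forall t, t \in `[0%R, 1%R] -> 0 < vs t) ->
  (forall t, t \in `[0%R, 1%R] -> 0 < lam t) ->
  0 < f ->
  let phistar := fun t => vs t ^+ 2 * lam t / IV vs lam in
  let mustar := fun _ : R => 0 in
  [/\ admissible_phi phistar, admissible_mu mustar,
      (forall phi mu, admissible_phi phi -> admissible_mu mu ->
         (asymp_var f vs lam phistar mustar <= asymp_var f vs lam phi mu)%E)
    & asymp_var f vs lam phistar mustar
        = (2 / f * IV vs lam ^+ 2 + IQ vs lam)%:E].
Proof.
move=> hv hl vp lp f0 phistar mustar.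
have cv := @holder_cont vs hv; have cl := @holder_cont lam hl.
pose a r := vs r ^+ 2 * lam r.
have ca : {within A, continuous a} by apply: wcM => //; exact: wcX.
have ia := @intc a ca.
have Ia := @intE a ia.
set I := IV vs lam.
have Ia' : (\int[leb]_(x in A) (a x)%:E = I%:E)%E by rewrite Ia.
have ap : forall t, A t -> 0 < a t.
  by move=> t At; rewrite /a mulr_gt0 // ?exprn_gt0 //; [exact: vp|exact: lp].
have Ipos : 0 < I.
  have [c Ac cmin] := EVT_min (@ler01 R) ca.
  have c0 : 0 < a c by exact: ap.
  have : ((a c)%:E <= I%:E)%E.
    rewrite -Ia'.
    have -> : (a c)%:E = (\int[leb]_(x in A) (a c)%:E)%E.
      rewrite (integral_cst leb mA).
      have := @lebesgue_measure_itv R `[0%R, 1%R]; rewrite /= lte_fin ltr01 oppr0 adde0 => L.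
      rewrite L. by rewrite mule1.
    apply: (le_integral mA) => //.
      exact: (@intc _ (wcC _)).
    by move=> x /set_mem Ax; rewrite lee_fin; exact: cmin.
  by rewrite lee_fin => /(lt_le_trans c0).
have In0 : I != 0 by rewrite gt_eqF.
have cps : {within A, continuous phistar}.
  have := @wcM a (fun _ => I^-1) ca (wcC _). exact.
have E1 : (\int[leb]_(r in A) (vs r ^+ 4 * lam r ^+ 2 / phistar r)%:E = (I ^+ 2)%:E)%E.
  transitivity (\int[leb]_(r in A) (I%:E * (a r)%:E))%E.
    apply: eq_integral => x /set_mem Ax; rewrite -EFinM /phistar /a -/I.
    have v0 := vp x Ax; have l0 := lp x Ax.
    by congr EFin; field; rewrite In0 /= ?gt_eqF.
  by rewrite (integralZl mA ia) Ia' -EFinM expr2.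
have E2 : (\int[leb]_(r in A) (vs r ^+ 4 * mustar r)%:E = 0)%E.
  transitivity (\int[leb]_(r in A) (cst 0%E r))%E.
    by apply: eq_integral => x _; rewrite /mustar mulr0.
  exact: integral0.
have E3 : (\int[leb]_(r in A) (vs r ^+ 4 * lam r)%:E = (IQ vs lam)%:E)%E.
  have c4 : {within A, continuous (fun r => vs r ^+ 4 * lam r)} 
    by have := @wcM (fun r => vs r ^+ 4) lam (@wcX vs 4 cv) cl.
  exact: (@intE _ (@intc _ c4)).
split.
- split; first exact: (@intc _ cps).
  split.
    by move=> t At; rewrite /phistar divr_gt0 //; exact: ap.
  transitivity (\int[leb]_(x in A) ((I^-1)%:E * (a x)%:E))%E.
    by apply: eq_integral => x _; rewrite /phistar -EFinM mulrC.
  by rewrite (integralZl mA ia) Ia' -EFinM mulVf.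
- by split; [exact: (@intc _ (wcC 0)) | move=> t _].
- move=> phi mu hphi [imu mu0].
  rewrite /asymp_var E1 E2; apply: leeD; last exact: lexx.
  apply: leeD.
    apply: lee_wpmul2l; first by rewrite lee_fin divr_ge0 // ltW.
    have -> : (\int[leb]_(r in A) (vs r ^+ 4 * lam r ^+ 2 / phi r)%:E = \int[leb]_(r in A) (a r ^+ 2 / phi r)%:E)%E.
      by apply: eq_integral => x _; rewrite /a; congr (EFin (_ / _)); ring.
    exact: (@lower a phi I ia hphi Ia').
  rewrite mule0; apply: mule_ge0 => //; apply: integral_ge0 => x Ax.
  have v0 := vp x Ax; have m0 := mu0 x Ax.
  by rewrite lee_fin mulr_ge0 // exprn_ge0 // ltW.
- by rewrite /asymp_var E1 E2 E3 mule0 adde0 -EFinM -EFinD.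
Qed.

End H.

Theorem corollary2 (R : realType) (vs lam : R -> R) (f : R) :
  holder01 vs -> holder01 lam ->
  (forall t, t \in `[0%R, 1%R] -> 0 < vs t) ->
  (forall t, t \in `[0%R, 1%R] -> 0 < lam t) ->
  0 < f ->
  let phistar := fun t => vs t ^+ 2 * lam t / IV vs lam in
  let mustar := fun _ : R => 0 in
  [/\ admissible_phi phistar, admissible_mu mustar,
      (forall phi mu, admissible_phi phi -> admissible_mu mu ->
         (asymp_var f vs lam phistar mustar <= asymp_var f vs lam phi mu)%E)
    & asymp_var f vs lam phistar mustar
        = (2 / f * IV vs lam ^+ 2 + IQ vs lam)%:E].
Proof. exact: (@main_aux R vs lam f). Qed.
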